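(* Let $A>0$, $B\in\mathbb R$, $0<E<|B|$ and $z_\gamma\in\mathbb R\setminus\{0\}$. The set $$\left\{\frac{\sqrt{4\pi A\ell(\pi A\ell-z_\gamma)}}{\sqrt{B^2/E^2-1}}:\ \ell\in\mathbb Z\setminus\{0\},\ \frac{2E}{E-|B|}<\frac{z_\gamma}{\pi A\ell}<\frac{2E}{E+|B|}\right\}$$ is bounded below by $|z_\gamma|$.
   Context: This set is the set of lengths of non-central closed magnetic geodesics of energy $E$ in the free homotopy class of a central element $\exp(z_\gamma Z)$ of a compact quotient of the three-dimensional Heisenberg group with metric parameter $A$ and magnetic parameter $B$; the claim is purely about the displayed set of real numbers. *)

(* Defs.v *)
From Stdlib Require Import Reals ZArith.
Open Scope R_scope.

Definition length_set (A B E z : R) : R -> Prop :=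
  fun x => exists l : Z, l <> 0%Z /\
    2 * E / (E - Rabs B) < z / (PI * A * IZR l) /\
    z / (PI * A * IZR l) < 2 * E / (E + Rabs B) /\
    x = sqrt (4 * PI * A * IZR l * (PI * A * IZR l - z))
        / sqrt (B ^ 2 / E ^ 2 - 1).

(* Main.v *)
Require Import Defs.
From Stdlib Require Import Reals ZArith Lra Psatz.
Open Scope R_scope.

Theorem lemma4p15 (A B E z : R) :
  0 < A -> 0 < E -> E < Rabs B -> z <> 0 ->
  forall x, length_set A B E z x -> Rabs z <= x.
Proof.
  intros HA HE HB Hz x [l [Hl [H1 [H2 Hx]]]].
  set (a := PI * A * IZR l) in *.
  set (b := Rabs B) in *.
  assert (Ha : a <> 0).
  { unfold a. apply Rmult_integral_contrapositive_currified.
    - pose proof PI_RGT_0; nra.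
    - apply not_0_IZR; exact Hl. }
  set (t := z / a) in *.
  assert (Hz' : z = t * a) by (unfold t; field; exact Ha).
  assert (HEb : E - b < 0) by lra.
  assert (HEb2 : 0 < E + b) by lra.
  assert (T1 : t * (E - b) < 2 * E).
  { apply Rmult_lt_reg_r with (/ (b - E)). apply Rinv_0_lt_compat; lra.
    replace (2 * E / (E - b)) with (- (2 * E * / (b - E))) in H1 by (field; lra).
    replace (t * (E - b) * / (b - E)) with (- t) by (field; lra). lra. }
  assert (T2 : t * (E + b) < 2 * E).
  { apply Rmult_lt_reg_r with (/ (E + b)). apply Rinv_0_lt_compat; lra.
    replace (t * (E + b) * / (E + b)) with t by (field; lra).
    unfold Rdiv in H2. lra. }
  assert (Key : t * t * (b * b - E * E) < 4 * E * E * (1 - t)) by nra.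
  set (k := B ^ 2 / E ^ 2 - 1).
  assert (Hk : k = (b * b - E * E) / (E * E)).
  { unfold k, b. replace (B ^ 2) with (Rabs B * Rabs B).
    field; lra. rewrite <- Rabs_mult. simpl. rewrite Rmult_1_r. apply Rabs_right.
    nra. }
  assert (Hkpos : 0 < k).
  { rewrite Hk. apply Rdiv_lt_0_compat; nra. }
  assert (Hineq : z * z * k <= 4 * PI * A * IZR l * (PI * A * IZR l - z)).
  { fold a. rewrite Hk, Hz'.
    assert (0 < a * a) by (assert (a * a <> 0) by (apply Rmult_integral_contrapositive_currified; auto); nra).
    apply Rmult_le_reg_r with (E * E). nra.
    replace (t * a * (t * a) * ((b * b - E * E) / (E * E)) * (E * E))
      with (a * a * (t * t * (b * b - E * E))) by (field; lra).
    replace (4 * PI * A * IZR l * (a - t * a) * (E * E))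
      with (a * a * (4 * E * E * (1 - t))) by (unfold a; ring).
    nra. }
  rewrite Hx. fold k.
  assert (Hsk : 0 < sqrt k) by (apply sqrt_lt_R0; exact Hkpos).
  apply Rmult_le_reg_r with (sqrt k). exact Hsk.
  fold a in Hineq |- *.
  set (S := sqrt (4 * PI * A * IZR l * (a - z))).
  replace (S / sqrt k * sqrt k) with S by (field; lra). unfold S.
  rewrite <- (sqrt_Rsqr (Rabs z)) by apply Rabs_pos.
  rewrite <- sqrt_mult_alt by apply Rle_0_sqr.
  apply sqrt_le_1_alt.
  unfold Rsqr. rewrite <- Rabs_mult, Rabs_right by nra. exact Hineq.
Qed.
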